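(* Let $k\ge2$, $-\frac{\pi}{2}\le\theta_1<\dots<\theta_k\le\frac{\pi}{2}$ and $\hat\theta_1,\dots,\hat\theta_k\in[-\frac{\pi}{2},\frac{\pi}{2}]$, and let $\epsilon>0$. Assume $$\|\eta_{k,k}(\theta_1,\dots,\theta_k,\hat\theta_1,\dots,\hat\theta_k)\|_\infty<\epsilon\quad\text{and}\quad\theta_{\min}=\min_{q\ne j}|\theta_q-\theta_j|\ge\Big(\frac{4\epsilon}{\lambda(k)}\Big)^{1/k}.$$ Then after reordering the $\hat\theta_j$, for all $j=1,\dots,k$, $$|\hat\theta_j-\theta_j|<\frac{\theta_{\min}}{2}\quad\text{and}\quad|\hat\theta_j-\theta_j|\le\frac{2^{k-1}\epsilon}{(k-2)!\,\theta_{\min}^{k-1}}.$$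
   Context: For $z_1,\dots,z_p,\hat z_1,\dots,\hat z_q\in\mathbb C$, $\eta_{p,q}(z_1,\dots,z_p,\hat z_1,\dots,\hat z_q)\in\mathbb R^p$ is the vector whose $j$-th entry is $\prod_{l=1}^q|z_j-\hat z_l|$. For an integer $k\ge1$: $\xi(1)=\frac12$; $\xi(k)=\frac{(\frac{k-1}{2})!(\frac{k-3}{2})!}{4}$ if $k\ge3$ is odd; $\xi(k)=\frac{((\frac{k-2}{2})!)^2}{4}$ if $k$ is even. For $k\ge2$: $\lambda(2)=1$ and $\lambda(k)=\xi(k-2)$ for $k\ge3$. *)

(* Defs.v *)
(* Stdlib Reals. Vectors indexed by nat, entries 0..p-1 (0-based). *)
From Stdlib Require Import Reals Lra Lia Arith List.
Open Scope R_scope.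

Definition prodR (q : nat) (f : nat -> R) : R :=
  fold_right Rmult 1 (map f (seq 0 q)).

Definition eta (p q : nat) (z zh : nat -> R) : nat -> R :=
  fun j => prodR q (fun l => Rabs (z j - zh l)).

Definition linf_norm (p : nat) (v : nat -> R) : R :=
  fold_right Rmax 0 (map (fun j => Rabs (v j)) (seq 0 p)).

Definition xi (k : nat) : R :=
  if Nat.eqb k 1 then 1/2
  else if Nat.odd k then
    INR (fact (Nat.div2 (k - 1)) * fact (Nat.div2 (k - 3))) / 4
  else INR (fact (Nat.div2 (k - 2))) ^ 2 / 4.

Definition lambda (k : nat) : R :=
  if Nat.eqb k 2 then 1 else xi (k - 2).

Definition is_min_sep (k : nat) (th : nat -> R) (m : R) : Prop :=
  (exists q j, (q < k)%nat /\ (j < k)%nat /\ q <> j /\ m = Rabs (th q - th j)) /\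
  (forall q j, (q < k)%nat -> (j < k)%nat -> q <> j -> m <= Rabs (th q - th j)).

Definition is_perm (k : nat) (sigma : nat -> nat) : Prop :=
  (forall j, (j < k)%nat -> (sigma j < k)%nat) /\
  (forall i j, (i < k)%nat -> (j < k)%nat -> sigma i = sigma j -> i = j).

(* Main.v *)
Require Import Defs.
From Stdlib Require Import Reals Lra Lia Arith List Permutation.
Open Scope R_scope.


Definition sumR (n : nat) (f : nat -> R) : R := fold_right Rplus 0 (map f (seq 0 n)).

Lemma prodR_S n f : prodR (S n) f = prodR n f * f n.
Proof.
  unfold prodR. rewrite seq_S, map_app, fold_right_app. simpl.
  generalize (map f (seq 0 n)). intro l. induction l; simpl; [ring|]. rewrite IHl. ring.
Qed.

Lemma sumR_S n f : sumR (S n) f = sumR n f + f n.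
Proof.
  unfold sumR. rewrite seq_S, map_app, fold_right_app. simpl.
  generalize (map f (seq 0 n)). intro l. induction l; simpl; [ring|]. rewrite IHl. ring.
Qed.

Lemma prodR_0 f : prodR 0 f = 1. Proof. reflexivity. Qed.
Lemma sumR_0 f : sumR 0 f = 0. Proof. reflexivity. Qed.

Lemma prodR_ext n f g : (forall i, (i < n)%nat -> f i = g i) -> prodR n f = prodR n g.
Proof.
  induction n; intros H; [reflexivity|]. rewrite !prodR_S, IHn, H; auto.
Qed.

Lemma sumR_ext n f g : (forall i, (i < n)%nat -> f i = g i) -> sumR n f = sumR n g.
Proof.
  induction n; intros H; [reflexivity|]. rewrite !sumR_S, IHn, H; auto.
Qed.

Lemma prodR_mult n f g : prodR n (fun i => f i * g i) = prodR n f * prodR n g.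
Proof. induction n; [rewrite ?prodR_0, ?sumR_0; ring|]. rewrite !prodR_S, IHn. ring. Qed.

Lemma prodR_abs n f : Rabs (prodR n f) = prodR n (fun i => Rabs (f i)).
Proof.
  induction n; [rewrite !prodR_0; apply Rabs_R1|]. rewrite !prodR_S, Rabs_mult, IHn. reflexivity.
Qed.

Lemma prodR_nonneg n f : (forall i, (i < n)%nat -> 0 <= f i) -> 0 <= prodR n f.
Proof.
  induction n; intros H; [rewrite ?prodR_0, ?sumR_0; lra|]. rewrite prodR_S. apply Rmult_le_pos; auto.
Qed.

Lemma prodR_pos n f : (forall i, (i < n)%nat -> 0 < f i) -> 0 < prodR n f.
Proof.
  induction n; intros H; [rewrite ?prodR_0, ?sumR_0; lra|]. rewrite prodR_S. apply Rmult_lt_0_compat; auto.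
Qed.

Lemma prodR_le n f g : (forall i, (i < n)%nat -> 0 <= f i <= g i) -> prodR n f <= prodR n g.
Proof.
  induction n; intros H; [rewrite ?prodR_0, ?sumR_0; lra|]. rewrite !prodR_S.
  assert (0 <= prodR n f) by (apply prodR_nonneg; intros; apply H; lia).
  assert (prodR n f <= prodR n g) by (apply IHn; intros; apply H; lia).
  destruct (H n ltac:(lia)). apply Rmult_le_compat; auto.
Qed.

Lemma prodR_zero n f : prodR n f = 0 -> exists i, (i < n)%nat /\ f i = 0.
Proof.
  induction n; intros H; [rewrite prodR_0 in H; lra|]. rewrite prodR_S in H.
  destruct (Rmult_integral _ _ H) as [H1|H1].
  - destruct (IHn H1) as [i [? ?]]. exists i; split; auto; lia.
  - exists n; split; auto.
Qed.

Lemma prodR_split n f j : (j < n)%nat ->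
  prodR n f = f j * prodR n (fun i => if Nat.eqb i j then 1 else f i).
Proof.
  induction n; intros Hj; [lia|]. rewrite !prodR_S.
  destruct (Nat.eq_dec j n) as [->|Hne].
  - rewrite Nat.eqb_refl.
    rewrite (prodR_ext n (fun i => if Nat.eqb i n then 1 else f i) f).
    + ring.
    + intros i Hi. destruct (Nat.eqb_spec i n); [lia|auto].
  - rewrite IHn by lia. destruct (Nat.eqb_spec n j); [lia|]. ring.
Qed.

Lemma prodR_const n c : prodR n (fun _ => c) = c ^ n.
Proof. induction n; [reflexivity|]. rewrite prodR_S, IHn. simpl. ring. Qed.

Lemma prodR_inv n f : (forall i, (i < n)%nat -> f i <> 0) ->
  prodR n (fun i => / f i) = / prodR n f.
Proof.
  induction n; intros H; [rewrite !prodR_0; field|]. rewrite !prodR_S, IHn by (intros; apply H; lia).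
  rewrite Rinv_mult. reflexivity.
Qed.

Lemma sumR_le n f g : (forall i, (i < n)%nat -> f i <= g i) -> sumR n f <= sumR n g.
Proof.
  induction n; intros H; [rewrite ?prodR_0, ?sumR_0; lra|]. rewrite !sumR_S.
  assert (sumR n f <= sumR n g) by (apply IHn; intros; apply H; lia).
  assert (f n <= g n) by (apply H; lia). lra.
Qed.

Lemma sumR_abs n f : Rabs (sumR n f) <= sumR n (fun i => Rabs (f i)).
Proof.
  induction n; [rewrite !sumR_0, Rabs_R0; lra|]. rewrite !sumR_S.
  eapply Rle_trans; [apply Rabs_triang|]. lra.
Qed.

Lemma sumR_scal n c f : sumR n (fun i => c * f i) = c * sumR n f.
Proof. induction n; [rewrite ?prodR_0, ?sumR_0; ring|]. rewrite !sumR_S, IHn. ring. Qed.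

Lemma sumR_f_R0 n f : sumR (S n) f = sum_f_R0 f n.
Proof. induction n. { rewrite sumR_S, sumR_0. simpl. lra. } rewrite sumR_S, IHn. simpl. reflexivity. Qed.

Lemma linf_ge p v j : (j < p)%nat -> Rabs (v j) <= linf_norm p v.
Proof.
  unfold linf_norm. intros Hj.
  assert (In j (seq 0 p)) by (apply in_seq; lia).
  generalize dependent (seq 0 p). intros l Hl. induction l; simpl in *; [tauto|].
  destruct Hl as [->|Hl].
  - apply Rmax_l.
  - eapply Rle_trans; [apply IHl; auto|apply Rmax_r].
Qed.


Definition prodA (h : nat -> R) (a : nat) : R := fold_right Rmult 1 (map h (seq 1 a)).

Lemma prodA_S h a : prodA h (S a) = prodA h a * h (S a).
Proof.
  unfold prodA. rewrite seq_S, map_app, fold_right_app. simpl.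
  generalize (map h (seq 1 a)). intro l. induction l; simpl; [ring|]. rewrite IHl. ring.
Qed.

Lemma prodA_0 h : prodA h 0 = 1. Proof. reflexivity. Qed.

Lemma prodR_shift n f : prodR (S n) f = f 0%nat * prodR n (fun m => f (S m)).
Proof. unfold prodR. simpl. rewrite <- seq_shift, map_map. reflexivity. Qed.

Lemma rev_part h j : prodR j (fun m => h (j - m)%nat) = prodA h j.
Proof.
  induction j; [reflexivity|]. rewrite prodR_shift, prodA_S. simpl.
  rewrite IHj. ring.
Qed.

Lemma range_split h j b :
  prodR (S j + b) (fun m => if Nat.eqb m j then 1 else h (j - m + (m - j))%nat)
  = prodA h j * prodA h b.
Proof.
  induction b.
  - rewrite Nat.add_0_r, prodR_S, Nat.eqb_refl, prodA_0.
    rewrite (prodR_ext j _ (fun m => h (j - m)%nat)).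
    + rewrite rev_part. ring.
    + intros i Hi. destruct (Nat.eqb_spec i j); [lia|]. f_equal. lia.
  - rewrite Nat.add_succ_r, prodR_S, IHb, prodA_S.
    destruct (Nat.eqb_spec (S j + b) j); [lia|].
    replace (j - (S j + b) + (S j + b - j))%nat with (S b) by lia. ring.
Qed.

Lemma range_split' h n j : (j < n)%nat ->
  prodR n (fun m => if Nat.eqb m j then 1 else h (j - m + (m - j))%nat)
  = prodA h j * prodA h (n - 1 - j).
Proof.
  intros Hj. replace n with (S j + (n - 1 - j))%nat at 1 by lia. apply range_split.
Qed.

Lemma prodA_fact t a : prodA (fun d => INR d * t) a = INR (fact a) * t ^ a.
Proof.
  induction a; [rewrite prodA_0; simpl; ring|]. rewrite prodA_S, IHa, fact_simpl, mult_INR.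
  simpl. ring.
Qed.

Definition g (a : nat) : R := prodA (fun d => 2 * INR d - 1) a.

Lemma g_S a : g (S a) = g a * (2 * INR a + 1).
Proof. unfold g. rewrite prodA_S, S_INR. ring. Qed.

Lemma g_pos a : 0 < g a.
Proof.
  induction a; [unfold g; rewrite prodA_0; lra|]. rewrite g_S.
  apply Rmult_lt_0_compat; auto. pose proof (pos_INR a). lra.
Qed.

Lemma prodA_g t a : prodA (fun d => (INR d - /2) * t) a = g a * (t / 2) ^ a.
Proof.
  induction a; [unfold g; rewrite !prodA_0; simpl; ring|]. rewrite prodA_S, IHa, g_S, S_INR.
  simpl. field.
Qed.

Lemma gg_bound n : forall a b, (a + b = S n)%nat -> INR (fact n) <= g a * g b.
Proof.
  induction n; intros a b Hab.
  - simpl. destruct a as [|[|a]]; destruct b as [|[|b]]; try lia;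
    rewrite ?g_S; unfold g; rewrite ?prodA_0; simpl; lra.
  - assert (Hsym : forall a b, (a + b = S (S n))%nat -> (a <= b)%nat -> INR (fact (S n)) <= g a * g b).
    { clear a b Hab. intros a b Hab Hle. destruct b as [|b]; [lia|].
      rewrite g_S. rewrite fact_simpl, mult_INR.
      specialize (IHn a b ltac:(lia)).
      assert (INR (S n) <= 2 * INR b + 1).
      { rewrite S_INR. assert (Hn: (n <= 2*b)%nat) by lia. apply le_INR in Hn. rewrite mult_INR in Hn. simpl (INR 2) in Hn. lra. }
      pose proof (g_pos a). pose proof (g_pos b). pose proof (pos_INR (fact n)). pose proof (pos_INR (S n)).
      replace (g a * (g b * (2 * INR b + 1))) with ((g a * g b) * (2 * INR b + 1)) by ring.
      rewrite Rmult_comm. apply Rmult_le_compat; lra. }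
    destruct (le_lt_dec a b).
    + apply Hsym; auto.
    + rewrite Rmult_comm. apply Hsym; lia.
Qed.


Lemma fact_bound n : (fact n * fact n * 4^n <= fact (2*n+1))%nat.
Proof.
  induction n; [simpl; lia|].
  replace (2 * S n + 1)%nat with (S (S (2*n+1))) by lia.
  rewrite !fact_simpl. rewrite Nat.pow_succ_r'.
  assert (H1: (S n * fact n * (S n * fact n) * (4 * 4 ^ n) = (4 * S n * S n) * (fact n * fact n * 4^n))%nat) by ring.
  rewrite H1, (Nat.mul_assoc (S (S _))). apply Nat.mul_le_mono; [nia|]. exact IHn.
Qed.

Lemma xi_even n : xi (2*n+2) = INR (fact n) ^ 2 / 4.
Proof.
  unfold xi. replace (Nat.eqb (2*n+2) 1) with false by (symmetry; apply Nat.eqb_neq; lia).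
  replace (Nat.odd (2*n+2)) with false.
  - replace (2*n+2-2)%nat with (2*n)%nat by lia. rewrite Nat.div2_double. reflexivity.
  - rewrite Nat.odd_add, Nat.odd_mul. reflexivity.
Qed.

Lemma xi_odd n : xi (2*n+3) = INR (fact (n+1) * fact n) / 4.
Proof.
  unfold xi. replace (Nat.eqb (2*n+3) 1) with false by (symmetry; apply Nat.eqb_neq; lia).
  replace (Nat.odd (2*n+3)) with true.
  - replace (2*n+3-1)%nat with (2*(n+1))%nat by lia. replace (2*n+3-3)%nat with (2*n)%nat by lia.
    rewrite !Nat.div2_double. reflexivity.
  - rewrite Nat.odd_add, Nat.odd_mul. reflexivity.
Qed.

Lemma lam_bound k : (2 <= k)%nat -> 0 < lambda k /\ lambda k * 2 ^ (k - 2) <= INR (fact (k - 1)).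
Proof.
  intros Hk.
  destruct (Nat.eq_dec k 2) as [->|H2].
  { unfold lambda. simpl. lra. }
  destruct (Nat.eq_dec k 3) as [->|H3].
  { unfold lambda, xi. simpl. lra. }
  unfold lambda. replace (Nat.eqb k 2) with false by (symmetry; apply Nat.eqb_neq; lia).
  destruct (Nat.Even_or_Odd k) as [[m Hm]|[m Hm]].
  -
    set (n := (m - 2)%nat).
    replace (k - 2)%nat with (2*n+2)%nat by lia. rewrite xi_even.
    replace (k - 1)%nat with (S (S (2*n+1))) by lia.
    pose proof (fact_bound n) as Hf. apply le_INR in Hf.
    rewrite !mult_INR, pow_INR in Hf. simpl (INR 4) in Hf.
    pose proof (fact_le (2*n+1) (S (S (2*n+1))) ltac:(lia)) as Hf2. apply le_INR in Hf2.
    pose proof (INR_fact_lt_0 n).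
    split. { apply Rmult_lt_0_compat; [apply pow_lt; auto|lra]. }
    replace (2 ^ (2*n+2)) with (4 * (2+2) ^ n).
    + replace (INR (fact n) ^ 2 / 4 * (4 * (2 + 2) ^ n)) with (INR (fact n) * INR (fact n) * (2+2)^n) by (simpl; field).
      replace (1 + 1 + 1 + 1) with (2+2) in Hf by ring. lra.
    + rewrite pow_add, pow_mult. simpl. replace (2*(2*1)) with (2+2) by ring. ring.
  -
    set (n := (m - 2)%nat).
    replace (k - 2)%nat with (2*n+3)%nat by lia. rewrite xi_odd.
    replace (k - 1)%nat with (S (S (S (2*n+1)))) by lia.
    pose proof (fact_bound n) as Hf. apply le_INR in Hf.
    rewrite !mult_INR, pow_INR in Hf. simpl (INR 4) in Hf.
    replace (1 + 1 + 1 + 1) with (2+2) in Hf by ring.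
    pose proof (INR_fact_lt_0 n). pose proof (INR_fact_lt_0 (2*n+1)).
    rewrite !fact_simpl, !mult_INR. replace (n+1)%nat with (S n) by lia. rewrite fact_simpl, mult_INR.
    split. { apply Rmult_lt_0_compat; [|lra]. pose proof (pos_INR n). rewrite S_INR. nra. }
    replace (2 ^ (2*n+3)) with (8 * (2+2) ^ n).
    + rewrite !S_INR. rewrite !plus_INR, !mult_INR. simpl (INR 2). simpl (INR 1).
      pose proof (pos_INR n).
      assert (HH: INR (fact n) * INR (fact n) * (2+2)^n <= INR (fact (2*n+1))) by lra.
      set (F := INR (fact n)) in *. set (G := INR (fact (2 * n + 1))) in *. set (P4 := (2+2)^n) in *.
      set (x := INR n) in *.
      assert (E: (x + 1) * F * F / 4 * (8 * P4) = 2 * (x+1) * (F*F*P4)) by field.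
      rewrite E.
      assert (2 * (x+1) * (F*F*P4) <= 2 * (x+1) * G) by (apply Rmult_le_compat_l; lra).
      assert (2 * (x+1) * G <= ((1 + 1) * x + 1 + 1 + 1 + 1) * (((1 + 1) * x + 1 + 1 + 1) * (((1 + 1) * x + 1 + 1) * G))).
      { replace (((1 + 1) * x + 1 + 1 + 1 + 1) * (((1 + 1) * x + 1 + 1 + 1) * (((1 + 1) * x + 1 + 1) * G)))
          with ((2*x+4)*(2*x+3) * (2 * (x+1) * G)) by ring.
        assert (0 <= 2 * (x+1) * G) by nra. nra. }
      lra.
    + rewrite pow_add, pow_mult. simpl. replace (2*(2*1)) with (2+2) by ring. ring.
Qed.



Module LagM.
From mathcomp Require Import all_boot all_algebra.
From mathcomp Require Import Rstruct zify.
Import GRing.Theory.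
Local Open Scope ring_scope.

Lemma seq_iota s n : List.seq s n = iota s n.
Proof. by elim: n s => [|n IH] s //=; rewrite IH. Qed.

Lemma prodR_big n f : prodR n f = \prod_(i <- iota 0 n) f i.
Proof.
rewrite /prodR seq_iota; elim: (iota 0 n) => [|a l IH]; first by rewrite big_nil.
by rewrite big_cons /= IH.
Qed.

Lemma sumR_big n f : sumR n f = \sum_(i <- iota 0 n) f i.
Proof.
rewrite /sumR seq_iota; elim: (iota 0 n) => [|a l IH]; first by rewrite big_nil.
by rewrite big_cons /= IH.
Qed.

Lemma eqbE (i j : nat) : Nat.eqb i j = (i == j).
Proof. by elim: i j => [|i IH] [|j] //=. Qed.

Section Lag.
Variables (n : nat) (x y : nat -> R).
Hypothesis xinj : forall i j, (i < n)%N -> (j < n)%N -> i <> j -> x i <> x j.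
Let s := iota 0 n.
Let Pp : {poly R} := \prod_(l <- s) ('X - (y l)%:P).
Let W : {poly R} := \prod_(i <- s) ('X - (x i)%:P).
Let L j : {poly R} := \prod_(i <- s) (if i == j then 1 else ('X - (x i)%:P) * ((x j - x i)^-1)%:P).

Lemma size_L_aux j (r : seq nat) :
  (size ((\prod_(i <- r) (if i == j then 1 else ('X - (x i)%:P) * ((x j - x i)^-1)%:P))%R : {poly R})
     <= (count (fun i => i != j) r).+1)%N.
Proof.
elim: r => [|a r IH]; first by rewrite big_nil size_poly1.
rewrite big_cons /=; case E: (a == j) => /=.
  by rewrite mul1r.
have hA : (size ((('X - (x a)%:P) * ((x j - x a)^-1)%:P)%R : {poly R}) <= 2)%N.
  apply: leq_trans (size_polyMleq _ _) _.
  by rewrite size_XsubC size_polyC; case: (_ != 0).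
apply: leq_trans (size_polyMleq _ _) _.
move: IH hA; set u := size _; set v := size _; move=> IH hA.
have IH' : (u <= (count (fun i : nat => i != j) r).+1)%N := IH. lia.
Qed.


Lemma Lsample j m : (j < n)%N -> (m < n)%N -> (L j).[x m] = (j == m)%:R.
Proof.
move=> hj hm; rewrite /L horner_prod.
have us : uniq s by exact: iota_uniq.
have ms : m \in s by rewrite mem_iota.
have [<-|ne] := eqVneq j m.
  rewrite big1_seq // => i /andP[_ iS].
  case E: (i == j); first by rewrite hornerC.
  rewrite hornerM hornerXsubC hornerC mulfV //.
  apply/eqP => /subr0_eq H.
  have hi : (i < n)%N by move: iS; rewrite mem_iota.
  by apply: (xinj j i hj hi _ H) => ij; rewrite ij eqxx in E.
have mj : (m == j) = false by rewrite eq_sym (negbTE ne).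
rewrite (bigD1_seq m) //= mj.
by rewrite hornerM hornerXsubC subrr !mul0r.
Qed.

Lemma W0 m : (m < n)%N -> W.[x m] = 0.
Proof.
move=> hm; apply/eqP; rewrite -/(root W (x m)) /W -(big_map x predT (fun a => 'X - a%:P)).
by rewrite root_prod_XsubC map_f // mem_iota.
Qed.

Lemma QE : Pp - W - \sum_(j <- s) Pp.[x j] *: L j = 0.
Proof.
have us : uniq s by exact: iota_uniq.
apply: (@roots_geq_poly_eq0 _ _ (map x s)).
- apply/allP => _ /mapP [m ms ->].
  have hm : (m < n)%N by move: ms; rewrite mem_iota.
  rewrite /root !hornerE horner_sum W0 //.
  rewrite (bigD1_seq m) //= hornerZ Lsample // eqxx mulr1.
  rewrite big1_seq ?addr0 ?subr0 ?subrr //.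
  move=> j /andP [jm js]; rewrite hornerZ Lsample ?(negbTE jm) ?mulr0 //.
  by move: js; rewrite mem_iota.
- rewrite map_inj_in_uniq // => i j; rewrite !mem_iota /= => hi hj e.
  by case: (i =P j) => // ne; exfalso; exact: (xinj i j hi hj ne e).
rewrite size_map size_iota.
apply: leq_trans (size_polyD _ _) _; rewrite geq_max size_polyN; apply/andP; split.
  have sP : size Pp = n.+1 by rewrite size_prod_XsubC size_iota.
  have sW : size W = n.+1 by rewrite size_prod_XsubC size_iota.
  apply/leq_sizeP => i hi; rewrite coefB.
  case: (ltngtP n i) hi => // [lt _|<- _].
    by rewrite !nth_default ?subrr // ?sP ?sW.
  have := lead_coef_prod_XsubC s predT y; have := lead_coef_prod_XsubC s predT x.
  by rewrite !lead_coefE -/Pp -/W sP sW /= => -> ->; rewrite subrr.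
apply: leq_trans (size_sum _ _ _) _; apply/bigmax_leqP_seq => j js _.
apply: leq_trans (size_scale_leq _ _) _; apply: leq_trans (size_L_aux j s) _.
have hc : (count (pred1 j) s + count (fun i => i != j) s = size s)%N by exact: count_predC.
have h1 : (0 < count (pred1 j) s)%N by rewrite -has_count has_pred1.
move: hc h1; rewrite size_iota; lia.
Qed.

Lemma lag_eval z : Pp.[z] - W.[z] = \sum_(j <- s) Pp.[x j] * (L j).[z].
Proof.
have := congr1 (fun p => p.[z]) QE; rewrite /= !hornerE horner_sum.
move/eqP; rewrite subr_eq0 => /eqP ->; apply: eq_bigr => j _; by rewrite hornerZ.
Qed.
End Lag.

Lemma lag_std n (x y : nat -> R) :
  (forall i j, (i < n)%N -> (j < n)%N -> i <> j -> x i <> x j) -> forall z : R,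
  prodR n (fun l => z - y l) - prodR n (fun i => z - x i) =
  sumR n (fun j => prodR n (fun l => x j - y l) *
     prodR n (fun i => if Nat.eqb i j then 1 else (z - x i) / (x j - x i))).
Proof.
move=> H z; have E := @lag_eval n x y H z.
rewrite !horner_prod in E.
have e1 : \prod_(i <- iota 0 n) ('X - (y i)%:P).[z] = \prod_(i <- iota 0 n) (z - y i).
  by apply: eq_bigr => i _; rewrite hornerXsubC.
have e2 : \prod_(i <- iota 0 n) ('X - (x i)%:P).[z] = \prod_(i <- iota 0 n) (z - x i).
  by apply: eq_bigr => i _; rewrite hornerXsubC.
rewrite e1 e2 in E; rewrite !prodR_big sumR_big E.
apply eq_bigr => j _; rewrite !prodR_big; congr (_ * _).
  by rewrite horner_prod; apply: eq_bigr => i _; rewrite hornerXsubC.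
rewrite horner_prod; apply: eq_bigr => i _; rewrite eqbE; case: (i == j); first by rewrite hornerC.
by rewrite hornerM hornerXsubC hornerC.
Qed.
End LagM.

Lemma lagrange_id n (x y : nat -> R) :
  (forall i j, (i < n)%nat -> (j < n)%nat -> i <> j -> x i <> x j) -> forall z : R,
  prodR n (fun l => z - y l) - prodR n (fun i => z - x i) =
  sumR n (fun j => prodR n (fun l => x j - y l) *
     prodR n (fun i => if Nat.eqb i j then 1 else (z - x i) / (x j - x i))).
Proof.
intros H z. apply LagM.lag_std.
intros i j hi hj. apply H; [exact (ssrbool.elimT ssrnat.ltP hi) | exact (ssrbool.elimT ssrnat.ltP hj)].
Qed.


Lemma gap_lemma k (x : nat -> R) t :
  (forall i, (S i < k)%nat -> t <= x (S i) - x i) ->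
  forall i j, (i <= j)%nat -> (j < k)%nat -> INR (j - i) * t <= x j - x i.
Proof.
  intros H i j Hij Hj. induction j.
  - assert (i = 0%nat) by lia. subst. simpl. lra.
  - destruct (Nat.eq_dec i (S j)) as [->|Hne].
    + rewrite Nat.sub_diag. simpl. lra.
    + specialize (IHj ltac:(lia) ltac:(lia)). specialize (H j Hj).
      replace (S j - i)%nat with (S (j - i)) by lia. rewrite S_INR. lra.
Qed.

Lemma sep_lemma k (x : nat -> R) t :
  (forall i, (S i < k)%nat -> t <= x (S i) - x i) ->
  forall i j, (i < k)%nat -> (j < k)%nat -> INR (j - i + (i - j)) * t <= Rabs (x j - x i).
Proof.
  intros H i j Hi Hj. destruct (le_lt_dec i j).
  - replace (j - i + (i - j))%nat with (j - i)%nat by lia.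
    pose proof (gap_lemma k x t H i j l Hj). pose proof (Rle_abs (x j - x i)). lra.
  - replace (j - i + (i - j))%nat with (i - j)%nat by lia.
    pose proof (gap_lemma k x t H j i ltac:(lia) Hi). pose proof (Rle_abs (x i - x j)). rewrite Rabs_minus_sym. lra.
Qed.

Lemma finite_choice (P : nat -> nat -> Prop) n :
  (forall j, (j < n)%nat -> exists l, P j l) -> exists f : nat -> nat, forall j, (j < n)%nat -> P j (f j).
Proof.
  induction n; intros H.
  - exists (fun _ => 0%nat). intros; lia.
  - destruct IHn as [f Hf]. { intros; apply H; lia. }
    destruct (H n ltac:(lia)) as [l Hl].
    exists (fun j => if Nat.eqb j n then l else f j). intros j Hj.
    destruct (Nat.eqb_spec j n) as [->|Hne]; auto. apply Hf; lia.
Qed.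

Lemma fold_perm (l l' : list R) : Permutation l l' -> fold_right Rmult 1 l = fold_right Rmult 1 l'.
Proof.
  induction 1; simpl; auto; try congruence; try ring.
Qed.

Lemma prodR_perm k (sigma : nat -> nat) f : is_perm k sigma ->
  prodR k f = prodR k (fun m => f (sigma m)).
Proof.
  intros [Hr Hi]. unfold prodR.
  assert (Hp : Permutation (map sigma (seq 0 k)) (seq 0 k)).
  { apply NoDup_Permutation_bis.
    - apply NoDup_map_NoDup_ForallPairs; [|apply seq_NoDup].
      intros a b Ha Hb E. apply in_seq in Ha. apply in_seq in Hb. apply Hi; auto; lia.
    - rewrite length_map. lia.
    - intros a Ha. apply in_map_iff in Ha. destruct Ha as [m [<- Hm]]. apply in_seq in Hm.
      apply in_seq. specialize (Hr m ltac:(lia)). lia. }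
  rewrite <- (map_map sigma f). symmetry. apply fold_perm. apply Permutation_map. exact Hp.
Qed.

Lemma sum_binom n : sumR (S n) (fun j => / (INR (fact j) * INR (fact (n - j)))) = 2 ^ n / INR (fact n).
Proof.
  pose proof (binomial 1 1 n) as B. rewrite <- sumR_f_R0 in B.
  replace (1 + 1) with 2 in B by ring.
  rewrite B. unfold Rdiv. rewrite Rmult_comm, <- sumR_scal. apply sumR_ext. intros i Hi.
  unfold C. rewrite !pow1. pose proof (INR_fact_lt_0 n). pose proof (INR_fact_lt_0 i).
  pose proof (INR_fact_lt_0 (n - i)). field. lra.
Qed.

Lemma prodR_cont n (y : nat -> R) : continuity (fun z => prodR n (fun l => z - y l)).
Proof.
  induction n.
  - intro z. apply continuity_pt_locally_ext with (f := fun _ => 1) (a := 1); [lra| |].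
    + intros; reflexivity.
    + apply continuity_const. intros a b; reflexivity.
  - intro z. apply continuity_pt_locally_ext with (f := fun z => prodR n (fun l => z - y l) * (z - y n)) (a := 1); [lra| |].
    + intros; rewrite prodR_S; reflexivity.
    + apply (continuity_mult (fun z => prodR n (fun l => z - y l)) (fun z => z - y n)); auto.
      apply (continuity_minus id (fun _ => y n)). apply derivable_continuous, derivable_id. apply continuity_const. intros a b; reflexivity.
Qed.


Lemma Lbound k (x : nat -> R) z t j :
  0 < t ->
  (forall i j, (i < k)%nat -> (j < k)%nat -> INR (j - i + (i - j)) * t <= Rabs (x j - x i)) ->
  (forall i, (i < k)%nat -> t / 2 <= Rabs (z - x i)) -> (j < k)%nat ->
  Rabs (prodR k (fun i => if Nat.eqb i j then 1 else (z - x i) / (x j - x i)))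
   <= Rabs (prodR k (fun i => z - x i)) * (2 / t) / (INR (fact j) * INR (fact (k - 1 - j)) * t ^ (k - 1)).
Proof.
  intros Ht Hsep Hz Hj.
  assert (Hne : forall i, (i < k)%nat -> i <> j -> 0 < Rabs (x j - x i)).
  { intros i Hi Hij. specialize (Hsep i j Hi Hj).
    assert (1 <= INR (j - i + (i - j))) by (apply (le_INR 1); lia). nra. }
  rewrite prodR_abs.
  rewrite (prodR_ext k _ (fun i => (if Nat.eqb i j then 1 else Rabs (z - x i)) *
                                 / (if Nat.eqb i j then 1 else Rabs (x j - x i)))).
  2:{ intros i Hi. destruct (Nat.eqb_spec i j). - rewrite Rabs_R1. field. - unfold Rdiv. rewrite Rabs_mult, Rabs_inv. reflexivity. }
  rewrite prodR_mult, prodR_inv.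
  2:{ intros i Hi. destruct (Nat.eqb_spec i j). - lra. - specialize (Hne i Hi n). lra. }
  set (N := prodR k (fun i => if Nat.eqb i j then 1 else Rabs (z - x i))).
  set (D := prodR k (fun i => if Nat.eqb i j then 1 else Rabs (x j - x i))).
  assert (HD : INR (fact j) * INR (fact (k - 1 - j)) * t ^ (k - 1) <= D).
  { unfold D. eapply Rle_trans; [|apply (prodR_le k (fun i => if Nat.eqb i j then 1 else INR (j - i + (i - j)) * t))].
    - rewrite (range_split' (fun d => INR d * t)) by exact Hj. rewrite !prodA_fact.
      replace (t ^ (k - 1)) with (t ^ j * t ^ (k - 1 - j)) by (rewrite <- pow_add; f_equal; lia). right. ring.
    - intros i Hi. destruct (Nat.eqb_spec i j). + lra. + split. * apply Rmult_le_pos; [apply pos_INR|lra]. * apply Hsep; auto. }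
  assert (HDl : 0 < INR (fact j) * INR (fact (k - 1 - j)) * t ^ (k - 1)).
  { pose proof (INR_fact_lt_0 j). pose proof (INR_fact_lt_0 (k - 1 - j)). pose proof (pow_lt t (k-1) Ht).
    apply Rmult_lt_0_compat; [apply Rmult_lt_0_compat|]; lra. }
  assert (HW : Rabs (prodR k (fun i => z - x i)) = Rabs (z - x j) * N).
  { rewrite prodR_abs. rewrite (prodR_split k _ j Hj). reflexivity. }
  assert (HN0 : 0 <= N).
  { unfold N. apply prodR_nonneg. intros i Hi. destruct (Nat.eqb i j); [lra|apply Rabs_pos]. }
  assert (HN : N <= Rabs (prodR k (fun i => z - x i)) * (2 / t)).
  { rewrite HW. specialize (Hz j Hj). 
    replace (Rabs (z - x j) * N * (2 / t)) with (N * (Rabs (z - x j) * (2/t))) by ring.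
    assert (1 <= Rabs (z - x j) * (2 / t)).
    { replace 1 with ((t/2) * (2/t)) by (field; lra). apply Rmult_le_compat_r; [|lra].
      unfold Rdiv. apply Rmult_le_pos; [lra|]. left; apply Rinv_0_lt_compat; lra. }
    nra. }
  assert (HiD : / D <= / (INR (fact j) * INR (fact (k - 1 - j)) * t ^ (k - 1))) by (apply Rinv_le_contravar; auto).
  unfold Rdiv at 2. apply Rmult_le_compat; auto.
  left. apply Rinv_0_lt_compat. lra.
Qed.

Lemma sign_lemma a b : Rabs (a - b) < Rabs b -> 0 < a * b.
Proof.
  intros H. destruct (Rcase_abs b) as [Hb|Hb]; destruct (Rcase_abs (a - b)) as [Hab|Hab];
  unfold Rabs in H; destruct (Rcase_abs b); destruct (Rcase_abs (a - b)); try lra; nra.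
Qed.

Lemma cover k (x y : nat -> R) t e :
  (1 <= k)%nat -> 0 < t -> 0 <= e ->
  (forall i j, (i < k)%nat -> (j < k)%nat -> INR (j - i + (i - j)) * t <= Rabs (x j - x i)) ->
  (forall j, (j < k)%nat -> prodR k (fun l => Rabs (x j - y l)) <= e) ->
  e * 2 ^ k < INR (fact (k - 1)) * t ^ k ->
  forall j0, (j0 < k)%nat -> exists l, (l < k)%nat /\ Rabs (x j0 - y l) < t / 2.
Proof.
  intros Hk Ht He Hsep Heta Hek j0 Hj0.
  assert (Hsep1 : forall i j, (i < k)%nat -> (j < k)%nat -> i <> j -> t <= Rabs (x j - x i)).
  { intros i j Hi Hj Hij. specialize (Hsep i j Hi Hj).
    assert (1 <= INR (j - i + (i - j))) by (apply (le_INR 1); lia). nra. }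
  assert (Hdist : forall i j, (i < k)%nat -> (j < k)%nat -> i <> j -> x i <> x j).
  { intros i j Hi Hj Hij E. specialize (Hsep1 i j Hi Hj Hij). rewrite E, Rminus_diag, Rabs_R0 in Hsep1. lra. }
  set (P := fun z => prodR k (fun l => z - y l)).
  set (W := fun z => prodR k (fun i => z - x i)).
  assert (K : forall z, (forall i, (i < k)%nat -> t / 2 <= Rabs (z - x i)) -> Rabs (P z - W z) < Rabs (W z)).
  { intros z Hz.
    assert (HW : 0 < Rabs (W z)).
    { unfold W. rewrite prodR_abs. apply prodR_pos. intros i Hi. specialize (Hz i Hi). lra. }
    unfold P, W. rewrite (lagrange_id k x y Hdist z). fold (W z).
    eapply Rle_lt_trans; [apply sumR_abs|].
    eapply Rle_lt_trans.
    { apply sumR_le with (g := fun j => e * (Rabs (W z) * (2 / t) / (INR (fact j) * INR (fact (k - 1 - j)) * t ^ (k - 1)))).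
      intros j Hj. rewrite Rabs_mult. apply Rmult_le_compat; try apply Rabs_pos.
      - rewrite prodR_abs. apply Heta; auto.
      - apply Lbound; auto. }
    destruct k as [|n]; [lia|].
    rewrite (sumR_ext (S n) _ (fun j => (e * Rabs (W z) * (2 / t) / t ^ n) * / (INR (fact j) * INR (fact (n - j))))).
    2:{ intros j Hj. replace (S n - 1 - j)%nat with (n - j)%nat by lia. replace (S n - 1)%nat with n by lia.
        pose proof (INR_fact_lt_0 j). pose proof (INR_fact_lt_0 (n - j)). pose proof (pow_lt t n Ht).
        field. repeat split; lra. }
    rewrite sumR_scal, sum_binom.
    replace (S n - 1)%nat with n in Hek by lia.
    pose proof (INR_fact_lt_0 n). pose proof (pow_lt t n Ht).
    replace (e * Rabs (W z) * (2 / t) / t ^ n * (2 ^ n / INR (fact n)))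
      with (Rabs (W z) * ((e * 2 ^ (S n)) / (INR (fact n) * t ^ (S n)))) by (simpl; field; repeat split; lra).
    assert (e * 2 ^ S n / (INR (fact n) * t ^ S n) < 1).
    { pose proof (pow_lt t (S n) Ht). apply (Rmult_lt_reg_r (INR (fact n) * t ^ S n)).
      - apply Rmult_lt_0_compat; lra.
      - unfold Rdiv. rewrite Rmult_assoc, Rinv_l; [lra|]. apply Rgt_not_eq. apply Rmult_lt_0_compat; lra. }
    nra. }
  set (z1 := x j0 - t / 2). set (z2 := x j0 + t / 2).
  assert (Hfar : forall i, (i < k)%nat -> i <> j0 -> x i <= x j0 - t \/ x j0 + t <= x i).
  { intros i Hi Hne. specialize (Hsep1 i j0 Hi Hj0 Hne). unfold Rabs in Hsep1.
    destruct (Rcase_abs (x j0 - x i)); lra. }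
  assert (Hz : forall z, (z = z1 \/ z = z2) -> forall i, (i < k)%nat -> t / 2 <= Rabs (z - x i)).
  { intros z Hzz i Hi. destruct (Nat.eq_dec i j0) as [->|Hne].
    - unfold z1, z2 in Hzz. destruct Hzz as [->| ->]; unfold Rabs; destruct (Rcase_abs _); lra.
    - destruct (Hfar i Hi Hne); unfold z1, z2 in Hzz; destruct Hzz as [->| ->]; unfold Rabs; destruct (Rcase_abs _); lra. }
  assert (HW12 : W z1 * W z2 < 0).
  { unfold W. rewrite <- prodR_mult. rewrite (prodR_split k _ j0 Hj0).
    assert (0 < prodR k (fun i => if Nat.eqb i j0 then 1 else (z1 - x i) * (z2 - x i))).
    { apply prodR_pos. intros i Hi. destruct (Nat.eqb_spec i j0); [lra|].
      destruct (Hfar i Hi n); unfold z1, z2; nra. }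
    assert ((z1 - x j0) * (z2 - x j0) < 0) by (unfold z1, z2; nra). nra. }
  pose proof (sign_lemma _ _ (K z1 (Hz z1 (or_introl eq_refl)))) as S1.
  pose proof (sign_lemma _ _ (K z2 (Hz z2 (or_intror eq_refl)))) as S2.
  assert (HP : P z1 * P z2 < 0).
  { assert (0 < (P z1 * W z1) * (P z2 * W z2)) by (apply Rmult_lt_0_compat; auto).
    replace ((P z1 * W z1) * (P z2 * W z2)) with ((P z1 * P z2) * (W z1 * W z2)) in H by ring.
    nra. }
  destruct (IVT_cor P z1 z2 (prodR_cont k y) ltac:(unfold z1, z2; lra) ltac:(lra)) as [z [Hzr Hz0]].
  destruct (prodR_zero k _ Hz0) as [l [Hl Hyl]].
  exists l. split; auto.
  assert (z <> z1). { intros E. rewrite E in Hz0. rewrite Hz0 in HP. lra. }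
  assert (z <> z2). { intros E. rewrite E in Hz0. rewrite Hz0 in HP. lra. }
  assert (y l = z) by lra. unfold z1, z2 in *. unfold Rabs; destruct (Rcase_abs _); lra.
Qed.


Theorem lemma3p7 (k : nat) (th thh : nat -> R) (eps tmin : R) :
  (2 <= k)%nat ->
  (forall j, (j < k)%nat -> - (PI / 2) <= th j <= PI / 2) ->
  (forall j, (S j < k)%nat -> th j < th (S j)) ->
  (forall j, (j < k)%nat -> - (PI / 2) <= thh j <= PI / 2) ->
  0 < eps ->
  linf_norm k (eta k k th thh) < eps ->
  is_min_sep k th tmin ->
  tmin >= Rpower (4 * eps / lambda k) (/ INR k) ->
  exists sigma : nat -> nat, is_perm k sigma /\
    forall j, (j < k)%nat ->
      Rabs (thh (sigma j) - th j) < tmin / 2 /\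
      Rabs (thh (sigma j) - th j) <=
        2 ^ (k - 1) * eps / (INR (fact (k - 2)) * tmin ^ (k - 1)).
Proof.
  intros Hk _ Hinc _ Heps Hlinf [_ Hmin] Hpow.
  set (t := tmin) in *.
  assert (Hgap : forall i, (S i < k)%nat -> t <= th (S i) - th i).
  { intros i Hi. specialize (Hmin (S i) i Hi ltac:(lia) ltac:(lia)). specialize (Hinc i Hi).
    rewrite Rabs_right in Hmin; lra. }
  pose proof (sep_lemma k th t Hgap) as Hsep.
  destruct (lam_bound k Hk) as [Hlam Hlam2].
  set (a := 4 * eps / lambda k) in *.
  assert (Ha : 0 < a) by (unfold a; apply Rdiv_lt_0_compat; lra).
  assert (Hrp : 0 < Rpower a (/ INR k)) by (unfold Rpower; apply exp_pos).
  assert (Ht : 0 < t) by lra.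
  assert (Htk : a <= t ^ k).
  { assert (E : Rpower a (/ INR k) ^ k = a).
    { rewrite <- Rpower_pow by exact Hrp. rewrite Rpower_mult, Rinv_l.
      - apply Rpower_1; exact Ha.
      - apply not_0_INR. lia. }
    rewrite <- E. apply pow_incr. lra. }
  assert (Heps2 : eps <= lambda k * t ^ k / 4).
  { unfold a in Htk. apply (Rmult_le_compat_r (lambda k / 4)) in Htk; [|lra].
    replace (4 * eps / lambda k * (lambda k / 4)) with eps in Htk by (field; lra). lra. }
  set (e := linf_norm k (eta k k th thh)) in *.
  assert (He0 : 0 <= e).
  { eapply Rle_trans; [apply Rabs_pos|]. apply (linf_ge k (eta k k th thh) 0). lia. }
  assert (Heta : forall j, (j < k)%nat -> prodR k (fun l => Rabs (th j - thh l)) <= e).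
  { intros j Hj. pose proof (linf_ge k (eta k k th thh) j Hj). unfold eta in H.
    rewrite Rabs_right in H; auto. apply Rle_ge, prodR_nonneg. intros; apply Rabs_pos. }
  assert (Hek : e * 2 ^ k < INR (fact (k - 1)) * t ^ k).
  { replace (2 ^ k) with (4 * 2 ^ (k - 2)) by (replace 4 with (2 ^ 2) by (simpl; ring); rewrite <- pow_add; f_equal; lia).
    pose proof (pow_lt 2 (k - 2) ltac:(lra)). pose proof (pow_lt t k Ht).
    assert (e * (4 * 2 ^ (k - 2)) < eps * (4 * 2 ^ (k - 2))) by (apply Rmult_lt_compat_r; lra).
    assert (eps * (4 * 2 ^ (k - 2)) <= lambda k * t ^ k / 4 * (4 * 2 ^ (k - 2))) by (apply Rmult_le_compat_r; lra).
    assert (lambda k * t ^ k / 4 * (4 * 2 ^ (k - 2)) = (lambda k * 2 ^ (k - 2)) * t ^ k) by field.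
    assert ((lambda k * 2 ^ (k - 2)) * t ^ k <= INR (fact (k - 1)) * t ^ k) by (apply Rmult_le_compat_r; lra).
    lra. }
  pose proof (cover k th thh t e ltac:(lia) Ht He0 Hsep Heta Hek) as Hcov.
  destruct (finite_choice (fun j l => (l < k)%nat /\ Rabs (th j - thh l) < t / 2) k Hcov) as [sigma Hsig].
  assert (Hperm : is_perm k sigma).
  { split.
    - intros j Hj. apply Hsig; auto.
    - intros i j Hi Hj E. destruct (Nat.eq_dec i j) as [|Hne]; auto. exfalso.
      destruct (Hsig i Hi) as [_ Hi2]. destruct (Hsig j Hj) as [_ Hj2]. rewrite E in Hi2.
      specialize (Hsep i j Hi Hj). assert (1 <= INR (j - i + (i - j))) by (apply (le_INR 1); lia).
      assert (Rabs (th j - th i) <= Rabs (th j - thh (sigma j)) + Rabs (thh (sigma j) - th i)).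
      { replace (th j - th i) with ((th j - thh (sigma j)) + (thh (sigma j) - th i)) by ring. apply Rabs_triang. }
      rewrite (Rabs_minus_sym (thh (sigma j))) in H0. nra. }
  exists sigma. split; auto.
  intros j Hj. destruct (Hsig j Hj) as [Hsj Hclose].
  split; [rewrite Rabs_minus_sym; exact Hclose|].
  set (B := prodR k (fun m => if Nat.eqb m j then 1 else Rabs (th j - thh (sigma m)))).
  assert (HetaB : Rabs (th j - thh (sigma j)) * B <= e).
  { rewrite <- (Heta j Hj). rewrite (prodR_perm k sigma _ Hperm). rewrite (prodR_split k _ j Hj). right. reflexivity. }
  set (F := INR (fact (k - 2))).
  assert (HF : 0 < F) by apply INR_fact_lt_0.
  assert (HB : F * (t / 2) ^ (k - 1) <= B).
  { unfold B. eapply Rle_trans; [|apply (prodR_le k (fun m => if Nat.eqb m j then 1 else (INR (j - m + (m - j)) - / 2) * t))].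
    - rewrite (range_split' (fun d => (INR d - / 2) * t)) by exact Hj. rewrite !prodA_g.
      pose proof (gg_bound (k - 2) j (k - 1 - j) ltac:(lia)) as Hg.
      replace ((t / 2) ^ (k - 1)) with ((t / 2) ^ j * (t / 2) ^ (k - 1 - j)) by (rewrite <- pow_add; f_equal; lia).
      pose proof (pow_lt (t/2) j ltac:(lra)). pose proof (pow_lt (t/2) (k - 1 - j) ltac:(lra)).
      assert (0 < (t / 2) ^ j * (t / 2) ^ (k - 1 - j)) by (apply Rmult_lt_0_compat; auto).
      replace (g j * (t / 2) ^ j * (g (k - 1 - j) * (t / 2) ^ (k - 1 - j))) with ((g j * g (k - 1 - j)) * ((t / 2) ^ j * (t / 2) ^ (k - 1 - j))) by ring.
      fold F in Hg. apply Rmult_le_compat_r; lra.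
    - intros m Hm. destruct (Nat.eqb_spec m j) as [->|Hne]; [lra|].
      assert (Hd : 1 <= INR (j - m + (m - j))) by (apply (le_INR 1); lia).
      split; [nra|].
      specialize (Hsep m j Hm Hj). destruct (Hsig m Hm) as [_ Hcm].
      assert (Rabs (th j - th m) <= Rabs (th j - thh (sigma m)) + Rabs (thh (sigma m) - th m)).
      { replace (th j - th m) with ((th j - thh (sigma m)) + (thh (sigma m) - th m)) by ring. apply Rabs_triang. }
      rewrite (Rabs_minus_sym (thh (sigma m))) in H. nra. }
  assert (HBl : 0 < F * (t / 2) ^ (k - 1)) by (apply Rmult_lt_0_compat; [lra|apply pow_lt; lra]).
  assert (Hd : Rabs (th j - thh (sigma j)) * (F * (t / 2) ^ (k - 1)) <= eps).
  { pose proof (Rabs_pos (th j - thh (sigma j))). assert (Rabs (th j - thh (sigma j)) * (F * (t / 2) ^ (k - 1)) <= Rabs (th j - thh (sigma j)) * B) by (apply Rmult_le_compat_l; lra). lra. }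
  rewrite Rabs_minus_sym.
  replace (2 ^ (k - 1) * eps / (F * t ^ (k - 1))) with (eps / (F * (t / 2) ^ (k - 1))).
  2:{ unfold Rdiv. rewrite Rpow_mult_distr, pow_inv. pose proof (pow_lt t (k-1) Ht). pose proof (pow_lt 2 (k-1) ltac:(lra)). field. split; lra. }
  apply (Rmult_le_reg_r (F * (t / 2) ^ (k - 1))); auto.
  unfold Rdiv. rewrite Rmult_assoc, Rinv_l by lra. lra.
Qed.
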